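(* Let $G$ be a group and $X$ a conjugacy class of $G$ that generates $G$. Assume there is a rack isomorphism $\varphi:\operatorname{Aff}(p,\alpha)\to X$ for some prime $p$ and some $\alpha\in\mathbb{Z}/p\mathbb{Z}\setminus\{0,1\}$. For $i\in\mathbb{Z}/p\mathbb{Z}$ put $g_i=\varphi(i)$, and put $\gamma=g_0g_1^{-1}$. Then: (1) For all $x,y,z\in\mathbb{Z}/p\mathbb{Z}$ and all integers $k\ge0$: $g_xg_y^{-1}=g_{x+z}g_{y+z}^{-1}$, $g_0g_k^{-1}=\gamma^k$ (with $k$ read modulo $p$ in the index), and $g_x\gamma=\gamma^{\alpha}g_x$ (with $\alpha$ represented by any integer). (2) The derived subgroup $[G,G]$ is cyclic of order $p$ and generated by $\gamma$.
   Context: A rack is a set with a binary operation $\triangleright$ such that each left multiplication $y\mapsto x\triangleright y$ is bijective and $x\triangleright(y\triangleright z)=(x\triangleright y)\triangleright(x\triangleright z)$. A conjugacy class $X$ is a rack with $x\triangleright y=xyx^{-1}$. $\operatorname{Aff}(p,\alpha)$ is the rack $\mathbb{Z}/p\mathbb{Z}$ with $i\triangleright j=(1-\alpha)i+\alpha j$. *)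

(* Defs.v *)
From HB Require Import structures.
From mathcomp Require Import all_boot all_algebra.
Set Implicit Arguments. Unset Strict Implicit. Unset Printing Implicit Defensive.
Import GRing.Theory.

Record group := Group {
  carrier :> Type;
  gmul : carrier -> carrier -> carrier;
  gone : carrier;
  ginv : carrier -> carrier;
  gmulA : forall x y z, gmul x (gmul y z) = gmul (gmul x y) z;
  gmul1 : forall x, gmul gone x = x;
  gmulr1 : forall x, gmul x gone = x;
  gmulV : forall x, gmul x (ginv x) = gone;
  gmulVl : forall x, gmul (ginv x) x = gone
}.

Section GroupDefs.
Variable G : group.

Fixpoint gpow (x : G) (n : nat) : G :=
  match n with O => gone G | S m => gmul x (gpow x m) end.

Definition gzpow (x : G) (z : int) : G :=
  match z with Posz n => gpow x n | Negz n => ginv (gpow x n.+1) end.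

Definition is_subgroup (H : G -> Prop) : Prop :=
  H (gone G) /\ (forall x y, H x -> H y -> H (gmul x y)) /\
  (forall x, H x -> H (ginv x)).

Definition gen (S : G -> Prop) : G -> Prop :=
  fun g => forall H, is_subgroup H -> (forall s, S s -> H s) -> H g.

Definition conj (h x : G) : G := gmul (gmul h x) (ginv h).

Definition is_conj_class (X : G -> Prop) : Prop :=
  exists a : G, forall x, X x <-> exists h, x = conj h a.

Definition generates (X : G -> Prop) : Prop := forall g, gen X g.

Definition commutator (x y : G) : G :=
  gmul (gmul (gmul x y) (ginv x)) (ginv y).

Definition derived : G -> Prop :=
  gen (fun c => exists x y, c = commutator x y).

Definition has_order (x : G) (n : nat) : Prop :=
  0 < n /\ gpow x n = gone G /\ (forall k, 0 < k < n -> gpow x k <> gone G).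
End GroupDefs.

(* The affine rack Aff(p, alpha) on Z/pZ (p prime, so Z/pZ = 'F_p). *)
Definition aff_op (p : nat) (alpha : 'F_p) (i j : 'F_p) : 'F_p :=
  ((1 - alpha) * i + alpha * j)%R.

Definition rack_iso (G : group) (X : G -> Prop) (p : nat) (alpha : 'F_p)
    (phi : 'F_p -> G) : Prop :=
  (forall i, X (phi i)) /\
  (forall i j, phi i = phi j -> i = j) /\
  (forall x, X x -> exists i, phi i = x) /\
  (forall i j, phi (aff_op alpha i j) = conj (phi i) (phi j)).

(* Main.v *)
Require Import Defs.
From mathcomp Require Import all_boot all_algebra.
From mathcomp Require Import ring.
Import GRing.Theory.

Section GL.
Variable G : group.
Local Notation "x ** y" := (gmul x y) (at level 40, left associativity).
Local Notation "x ^-" := (ginv x) (at level 2, format "x ^-").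
Local Notation e := (gone G).

Lemma mulVK (x y : G) : x^- ** (x ** y) = y.
Proof. by rewrite gmulA gmulVl gmul1. Qed.
Lemma mulKV (x y : G) : x ** (x^- ** y) = y.
Proof. by rewrite gmulA gmulV gmul1. Qed.
Lemma mulKr (x y : G) : x ** y ** y^- = x.
Proof. by rewrite -gmulA gmulV gmulr1. Qed.
Lemma mulKrV (x y : G) : x ** y^- ** y = x.
Proof. by rewrite -gmulA gmulVl gmulr1. Qed.
Lemma inv_uniq (x y : G) : x ** y = e -> y = x^-.
Proof. by move=> h; rewrite -(mulVK x y) h gmulr1. Qed.
Lemma invK (x : G) : (x^-)^- = x.
Proof. by symmetry; apply: inv_uniq; rewrite gmulVl. Qed.
Lemma invM (x y : G) : (x ** y)^- = y^- ** x^-.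
Proof. by symmetry; apply: inv_uniq; rewrite gmulA mulKr gmulV. Qed.
Lemma inv1 : e^- = e.
Proof. by symmetry; apply: inv_uniq; rewrite gmul1. Qed.
Lemma mul_cancl (x y z : G) : x ** y = x ** z -> y = z.
Proof. by move=> h; rewrite -(mulVK x y) h mulVK. Qed.
Lemma mul_cancr (x y z : G) : y ** x = z ** x -> y = z.
Proof. by move=> h; rewrite -(mulKr y x) h mulKr. Qed.

Lemma gpowD (x : G) m n : gpow x (m + n) = gpow x m ** gpow x n.
Proof. elim: m => [|m IH] /=; first by rewrite gmul1. by rewrite IH gmulA. Qed.

Lemma gen_sub (S : G -> Prop) : is_subgroup (gen S).
Proof.
split; first by move=> H [h1 _].
split.
  by move=> x y hx hy H hH hS; case: (hH) => _ [hm _]; apply: hm; [apply: hx|apply: hy].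
by move=> x hx H hH hS; case: (hH) => _ [_ hi]; apply: hi; apply: hx.
Qed.

Lemma sub_pow (H : G -> Prop) x n : is_subgroup H -> H x -> H (gpow x n).
Proof. move=> [h1 [hm _]] hx; elim: n => //= n IH; exact: hm. Qed.

Lemma conjD (h u v : G) : conj h u ** (conj h v)^- = conj h (u ** v^-).
Proof. by rewrite /conj !invM invK !gmulA mulKrV. Qed.
Lemma conjC (h g u : G) : conj h (conj g u) = conj (h ** g) u.
Proof. by rewrite /conj invM !gmulA. Qed.
Lemma mulVKl (x y : G) : x^- ** x ** y = y.
Proof. by rewrite gmulVl gmul1. Qed.
Lemma commM (x y z : G) :
  commutator x (y ** z) = commutator x y ** (y ** commutator x z ** y^-).
Proof. by rewrite /commutator !invM !gmulA !mulKrV. Qed.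
Lemma commV (x y : G) : commutator x y^- = y^- ** (commutator x y)^- ** (y^-)^-.
Proof. by rewrite /commutator !invM !invK !gmulA mulVKl. Qed.
Lemma commI (x y : G) : commutator y x = (commutator x y)^-.
Proof. by rewrite /commutator !invM !invK !gmulA. Qed.
Lemma comm1 (x : G) : commutator x e = e.
Proof. by rewrite /commutator gmulr1 gmulV inv1 gmulr1. Qed.
Lemma eq_of_D (x y : G) : x ** y^- = e -> x = y.
Proof. by move=> h; rewrite -(mulKrV x y) h gmul1. Qed.
End GL.

Theorem mainTheorem4 (G : group) (X : G -> Prop) (p : nat) (alpha : 'F_p)
  (phi : 'F_p -> G) :
  is_conj_class X -> generates X -> prime p ->
  alpha != 0%R -> alpha != 1%R ->
  rack_iso X alpha phi ->
  let gamma := gmul (phi 0%R) (ginv (phi 1%R)) in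
  ((forall x y z : 'F_p,
      gmul (phi x) (ginv (phi y)) = gmul (phi (x + z)%R) (ginv (phi (y + z)%R))) /\
   (forall k : nat, gmul (phi 0%R) (ginv (phi (k%:R)%R)) = gpow gamma k) /\
   (forall (x : 'F_p) (a : int), (a%:~R)%R = alpha ->
      gmul (phi x) gamma = gmul (gzpow gamma a) (phi x))) /\
  ((forall g, derived g <-> exists k : nat, g = gpow gamma k) /\
   has_order gamma p).
Proof.
move=> [a0 Ha] Hgen pp an0 an1 [HX [Hinj [Hsurj Hr]]] gamma.
have a1 : (1 - alpha != 0)%R by rewrite subr_eq0 eq_sym.
pose D x y := gmul (phi x) (ginv (phi y)).
pose op := aff_op alpha.
have key : forall i k, D i (op k i) = D (op i k) k.
  move=> i k; rewrite /D /op !Hr /conj !invM !invK !gmulA.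
  by rewrite -/(aff_op alpha) -!gmulA.
have shift : forall a b c, c = (alpha * (b - a) / (1 - alpha))%R ->
    D a b = D (a + c)%R (b + c)%R.
  move=> a b c hc.
  pose k := ((b - alpha * a) / (1 - alpha))%R.
  have e1 : op k a = b by rewrite /op /aff_op /k; field.
  have e2 : op a k = (a + c)%R by rewrite /op /aff_op /k hc; field.
  have e3 : k = (b + c)%R by rewrite /k hc; field.
  by have := key a k; rewrite e1 e2 e3.
have iter : forall n a b, D a b =
    D (a + (n%:R)%R * (alpha * (b - a) / (1 - alpha)))%R
      (b + (n%:R)%R * (alpha * (b - a) / (1 - alpha)))%R.
  move=> n a b; set s := (alpha * (b - a) / (1 - alpha))%R.
  elim: n => [|n IH]; first by rewrite !mul0r !addr0.
  rewrite IH (shift _ _ s); last first.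
    rewrite /s; congr (alpha * _ / _)%R; ring.
  rewrite -natr1; congr (D _ _); ring.
have trans : forall x y z, D x y = D (x + z)%R (y + z)%R.
  move=> x y z; case: (eqVneq x y) => [->|hxy].
    by rewrite /D !gmulV.
  set s := (alpha * (y - x) / (1 - alpha))%R.
  have s0 : s != 0%R.
    rewrite /s mulf_neq0 ?invr_eq0 // mulf_neq0 //.
    by rewrite subr_eq0 eq_sym.
  have := iter (nat_of_ord (z / s)%R) x y; rewrite -/s natr_Zp divfK //.
have powD : forall k : nat, D 0%R (k%:R)%R = gpow gamma k.
  elim=> [|k IH] /=; first by rewrite /D mulr0n gmulV.
  rewrite -IH (trans 0%R (k%:R)%R 1%R) add0r natr1 /gamma /D.
  by rewrite gmulA mulKrV.
have Dinv : forall x y, ginv (D x y) = D y x.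
  by move=> x y; rewrite /D invM invK.
have Dmul : forall x y z, gmul (D x y) (D y z) = D x z.
  by move=> x y z; rewrite /D gmulA mulKrV.
have conjX : forall g i, exists j, conj g (phi i) = phi j.
  move=> g i; have [j hj] : exists j, phi j = conj g (phi i).
    apply: Hsurj; have [h ->] := (Ha (phi i)).1 (HX i).
    by apply/Ha; exists (gmul g h); rewrite conjC.
  by exists j.
split; [split; [exact: trans | split; [exact: powD|]] |].
  move=> x a ha.
  have hc : conj (phi x) gamma = D 0%R alpha.
    rewrite /gamma -conjD -!Hr -/(D _ _) (trans _ _ (- op x 0%R)%R) subrr.
    congr (D _ _); rewrite /op /aff_op; ring.
  have hz : D 0%R alpha = gzpow gamma a.
    case: a ha => n /= <-.
      by rewrite -powD.
    rewrite NegzE mulrNz -[gmul gamma _]/(gpow gamma n.+1) -powD Dinv.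
    rewrite [RHS](trans _ _ (- (n.+1%:R))%R)%R subrr add0r.
    by [].
  by rewrite -hz -hc /conj mulKrV.
pose N g := exists j, g = D 0%R j.
have ND : forall x y, N (D x y).
  by move=> x y; exists (y - x)%R; rewrite (trans _ _ (- x)%R) subrr.
have Nsub : is_subgroup N.
  split; first by exists 0%R; rewrite /D gmulV.
  split.
    move=> _ _ [j ->] [k ->]; rewrite (trans 0%R k j) add0r Dmul; exact: ND.
  by move=> _ [j ->]; rewrite Dinv; exact: ND.
have Nnorm : forall g n, N n -> N (conj g n).
  move=> g _ [j ->]; rewrite /D -conjD.
  have [i' ->] := conjX g 0%R; have [j' ->] := conjX g j; exact: ND.
have NinvE : forall n, N (ginv n) -> N n.
  by move=> n /(Nsub.2.2) ; rewrite invK.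
have Scomm : forall x, is_subgroup (fun y => N (commutator x y)).
  move=> x; split; first by rewrite comm1; exists 0%R; rewrite /D gmulV.
  split.
    move=> y z hy hz; rewrite commM; apply: Nsub.2.1 => //.
    exact: (Nnorm y _ hz).
  move=> y hy; rewrite commV; apply: (Nnorm (ginv y)).
  exact: Nsub.2.2.
have gen1 : forall i y, N (commutator (phi i) y).
  move=> i y; apply: (Hgen y _ (Scomm (phi i))) => s /Hsurj [j <-].
  rewrite /commutator -/(conj _ _) -Hr; exact: ND.
have allN : forall x y, N (commutator x y).
  move=> x y; apply: (Hgen y _ (Scomm x)) => s /Hsurj [j <-].
  apply: NinvE; rewrite -commI; exact: gen1.
have gamma_comm : exists x y, gamma = commutator x y.
  have [h0 e0] := (Ha (phi 0%R)).1 (HX 0%R).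
  have [h1 e1] := (Ha (phi 1%R)).1 (HX 1%R).
  exists (phi 0%R), (gmul h1 (ginv h0)).
  have e : phi 1%R = conj (gmul h1 (ginv h0)) (phi 0%R).
    by rewrite e0 conjC e1 mulKrV.
  by rewrite /gamma e /conj /commutator !invM !invK !gmulA.
split.
  move=> g; split.
    move=> hg; have [j ->] : N g.
      by apply: hg Nsub _ => c [x [y ->]]; exact: allN.
    exists (nat_of_ord j); by rewrite -powD natr_Zp.
  move=> [k ->].
  have hd : derived gamma by move=> H hH hS; apply: hS.
  apply: (@sub_pow G (@derived G) gamma k _ hd); exact: gen_sub.
split; first exact: prime_gt0.
split; first by rewrite -powD pchar_Fp_0 // /D gmulV.
move=> k /andP [k0 kp]; rewrite -powD => /eq_of_D /Hinj /eqP.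
rewrite eq_sym -(dvdn_pcharf (pchar_Fp pp)) => /(dvdn_leq k0).
by rewrite leqNgt kp.
Qed.
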